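(* Let $K\subseteq\mathbb{R}^2$ be a centrally symmetric closed convex set with non-empty interior. Then $\mu_2(K)\le 2\mu_1(K)$.
   Context: For $j=1,2$, the $j$-th covering minimum is $\mu_j(K):=\inf\{t\ge0:\text{every }(2-j)\text{-dimensional affine subspace of }\mathbb{R}^2\text{ intersects }tK+\mathbb{Z}^2\}$. Thus $\mu_1(K)$ is the least $t$ such that every line meets $tK+\mathbb{Z}^2$, and $\mu_2(K)$ is the least $t$ such that $tK+\mathbb{Z}^2=\mathbb{R}^2$. $K$ is centrally symmetric if $K=2c-K$ for some $c\in\mathbb{R}^2$. *)

(* Defs.v *)
(* the plane R^2 is modelled as R * R with the
   product (= Euclidean) topology, for an arbitrary R : realType. *)
From HB Require Import structures.
From mathcomp Require Import all_boot all_order all_algebra.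
From mathcomp Require Import all_classical all_reals all_analysis.
Set Implicit Arguments. Unset Strict Implicit. Unset Printing Implicit Defensive.
Import Order.TTheory GRing.Theory Num.Theory numFieldNormedType.Exports.
Local Open Scope classical_set_scope.
Local Open Scope ring_scope.

Section Plane.
Variable R : realType.
Notation pt := (R * R)%type.

Definition scale_pt (t : R) (x : pt) : pt := (t * x.1, t * x.2).
Definition add_pt (x y : pt) : pt := (x.1 + y.1, x.2 + y.2).

Definition lattice : set pt :=
  [set z | exists m n : int, z = (m%:~R, n%:~R)].

Definition scaled_translates (t : R) (K : set pt) : set pt :=
  [set add_pt (scale_pt t k) z | k in K & z in lattice].

Definition convex_set2 (K : set pt) : Prop :=
  forall x y, K x -> K y -> forall l : R, 0 <= l -> l <= 1 ->
    K (add_pt (scale_pt (1 - l) x) (scale_pt l y)).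

Definition centrally_symmetric (K : set pt) : Prop :=
  exists c : pt, K = [set (2 * c.1 - x.1, 2 * c.2 - x.2) | x in K].

Definition line (p v : pt) : set pt := [set add_pt p (scale_pt s v) | s in [set: R]].

Definition mu1 (K : set pt) : R :=
  inf [set t : R | 0 <= t /\
        forall p v : pt, v != (0, 0) -> line p v `&` scaled_translates t K !=set0].

(* mu_2: every point (0-dim affine subspace) meets tK + Z^2, i.e. tK + Z^2 = R^2 *)
Definition mu2 (K : set pt) : R :=
  inf [set t : R | 0 <= t /\ scaled_translates t K = [set: pt]].

End Plane.

(* Main.v *)
Require Import Defs.
From HB Require Import structures.
From mathcomp Require Import all_boot all_order all_algebra.
From mathcomp Require Import all_classical all_reals all_analysis.
From mathcomp Require Import ring lra zify.
Import Order.TTheory GRing.Theory Num.Theory numFieldNormedType.Exports.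
Local Open Scope classical_set_scope.
Local Open Scope ring_scope.
Set Implicit Arguments. Unset Strict Implicit. Unset Printing Implicit Defensive.

Section P1.
Variable R : realType.
Notation pt := (R * R)%type.

Definition cmb (th : R) (U V : pt) : pt :=
  ((1 - th) * U.1 + th * V.1, (1 - th) * U.2 + th * V.2).
Definition negp (x : pt) : pt := (- x.1, - x.2).
Definition cvx (L : set pt) := forall U V th, L U -> L V -> 0 <= th -> th <= 1 -> L (cmb th U V).
Definition symm (L : set pt) := forall x, L x -> L (negp x).
Definition lin (f : pt -> R) :=
  (forall th U V, f (cmb th U V) = (1 - th) * f U + th * f V) /\ (forall x, f (negp x) = - f x).

Lemma seg (L : set pt) fa fb U V t : cvx L -> lin fa -> lin fb -> L U -> L V ->
  fb U < fb V -> fb U <= t -> t <= fb V ->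
  exists X, [/\ L X, fb X = t & fa X = fa U + (fa V - fa U) * ((t - fb U) / (fb V - fb U))].
Proof.
move=> cL [la _] [lb _] LU LV ltUV h1 h2.
have d0 : 0 < fb V - fb U by rewrite subr_gt0.
set th := (t - fb U) / (fb V - fb U).
have th0 : 0 <= th by rewrite divr_ge0 // ?subr_ge0 // ltW.
have th1 : th <= 1 by rewrite ler_pdivrMr // mul1r lerD2r.
exists (cmb th U V); split => //; first exact: cL.
  rewrite lb /th; field; lra.
by rewrite la; ring.
Qed.

Lemma chord (L : set pt) fa fb P Q Rr a b c : cvx L -> symm L -> lin fa -> lin fb ->
  L P -> L Q -> L Rr -> fb P = 1 -> fa P = a -> 0 <= a -> a <= 1 ->
  fa Q = 1 -> fb Q = b -> -1 <= b -> b <= 1 ->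
  fa Rr = 1 + c -> fb Rr = c -> -1 <= c -> c <= 1 ->
  exists Rp Rm, [/\ L Rp, L Rm, fb Rp = 1/2, fb Rm = -(1/2) & 1 <= fa Rp + fa Rm].
Proof.
move=> cL sL la lb LP LQ LR fbP faP a0 a1 faQ fbQ b0 b1 faR fbR c0 c1.
have LPm := sL _ LP.
have fbPm : fb (negp P) = -1 by rewrite lb.2 fbP.
have faPm : fa (negp P) = -a by rewrite la.2 faP.
have [hb|hb] := lerP b 0.
  have [Xp [LXp fXp aXp]] : exists X, [/\ L X, fb X = 1/2 &
        fa X = fa Q + (fa P - fa Q) * ((1/2 - fb Q) / (fb P - fb Q))].
    by apply: seg => //; rewrite ?fbQ ?fbP; lra.
  have [hb2|hb2] := lerP b (-(1/2)).
    have [Xm [LXm fXm aXm]] : exists X, [/\ L X, fb X = -(1/2) &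
          fa X = fa Q + (fa P - fa Q) * ((-(1/2) - fb Q) / (fb P - fb Q))].
      by apply: seg => //; rewrite ?fbQ ?fbP; lra.
    exists Xp, Xm; split => //.
    rewrite aXp aXm faQ fbQ faP fbP.
    have -> : 1 + (a - 1) * ((1 / 2 - b) / (1 - b)) + (1 + (a - 1) * ((- (1 / 2) - b) / (1 - b)))
       = 1 + (1 + b - 2 * a * b) / (1 - b) by field; lra.
    rewrite lerDl divr_ge0 //; nra.
  have [Xm [LXm fXm aXm]] : exists X, [/\ L X, fb X = -(1/2) &
        fa X = fa (negp P) + (fa Q - fa (negp P)) * ((-(1/2) - fb (negp P)) / (fb Q - fb (negp P)))].
    by apply: seg => //; rewrite ?fbQ ?fbPm; lra.
  exists Xp, Xm; split => //.
  rewrite aXp aXm faQ fbQ faP fbP faPm fbPm.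
  have -> : 1 + (a - 1) * ((1 / 2 - b) / (1 - b)) + (- a + (1 - - a) * ((- (1 / 2) - -1) / (b - -1)))
     = 1 + (b * (b - a)) / ((1 - b) * (1 + b)) by field; lra.
  rewrite lerDl divr_ge0 //; nra.
have [hc|hc] := lerP 0 c.
  have [hc2|hc2] := lerP c (1/2).
    have [Xp [LXp fXp aXp]] : exists X, [/\ L X, fb X = 1/2 &
          fa X = fa Rr + (fa P - fa Rr) * ((1/2 - fb Rr) / (fb P - fb Rr))].
      by apply: seg => //; rewrite ?fbR ?fbP; lra.
    have [Xm [LXm fXm aXm]] : exists X, [/\ L X, fb X = -(1/2) &
          fa X = fa (negp P) + (fa Rr - fa (negp P)) * ((-(1/2) - fb (negp P)) / (fb Rr - fb (negp P)))].
      by apply: seg => //; rewrite ?fbR ?fbPm; lra.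
    exists Xp, Xm; split => //.
    rewrite aXp aXm faR fbR faP fbP faPm fbPm.
    have -> : 1 + c + (a - (1 + c)) * ((1 / 2 - c) / (1 - c)) +
       (- a + (1 + c - - a) * ((- (1 / 2) - -1) / (c - -1)))
       = 1 + (c * (1 - a + c)) / ((1 - c) * (1 + c)) by field; lra.
    rewrite lerDl divr_ge0 //; nra.
  have [Xp [LXp fXp aXp]] : exists X, [/\ L X, fb X = 1/2 &
        fa X = fa (negp P) + (fa Rr - fa (negp P)) * ((1/2 - fb (negp P)) / (fb Rr - fb (negp P)))].
    by apply: seg => //; rewrite ?fbR ?fbPm; lra.
  have [Xm [LXm fXm aXm]] : exists X, [/\ L X, fb X = -(1/2) &
        fa X = fa (negp P) + (fa Rr - fa (negp P)) * ((-(1/2) - fb (negp P)) / (fb Rr - fb (negp P)))].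
    by apply: seg => //; rewrite ?fbR ?fbPm; lra.
  exists Xp, Xm; split => //.
  rewrite aXp aXm faR fbR faPm fbPm.
  have -> : - a + (1 + c - - a) * ((1 / 2 - -1) / (c - -1)) +
      (- a + (1 + c - - a) * ((- (1 / 2) - -1) / (c - -1)))
      = 1 + (1 + c - 2 * a * c) / (1 + c) by field; lra.
  rewrite lerDl divr_ge0 //; nra.
(* c < 0 < b *)
have [Xm [LXm fXm aXm]] : exists X, [/\ L X, fb X = -(1/2) & 
   (-(1/2) <= c -> fa X = fa (negp P) + (fa Rr - fa (negp P)) * ((-(1/2) - fb (negp P)) / (fb Rr - fb (negp P))))
   /\ (c < -(1/2) -> fa X = fa Rr + (fa Q - fa Rr) * ((-(1/2) - fb Rr) / (fb Q - fb Rr)))].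
  have [hc2|hc2] := lerP (-(1/2)) c.
    have [X [LX fX aX]] : exists X, [/\ L X, fb X = -(1/2) &
        fa X = fa (negp P) + (fa Rr - fa (negp P)) * ((-(1/2) - fb (negp P)) / (fb Rr - fb (negp P)))].
      by apply: seg => //; rewrite ?fbR ?fbPm; lra.
    by exists X; split => //; split => // ?; lra.
  have [X [LX fX aX]] : exists X, [/\ L X, fb X = -(1/2) &
      fa X = fa Rr + (fa Q - fa Rr) * ((-(1/2) - fb Rr) / (fb Q - fb Rr))].
    by apply: seg => //; rewrite ?fbR ?fbQ; lra.
  by exists X; split => //; split => // ?; lra.
have [Xp [LXp fXp aXp]] : exists X, [/\ L X, fb X = 1/2 & 
   (b <= 1/2 -> fa X = fa Q + (fa P - fa Q) * ((1/2 - fb Q) / (fb P - fb Q)))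
   /\ (1/2 < b -> fa X = fa Rr + (fa Q - fa Rr) * ((1/2 - fb Rr) / (fb Q - fb Rr)))].
  have [hb2|hb2] := lerP b (1/2).
    have [X [LX fX aX]] : exists X, [/\ L X, fb X = 1/2 &
        fa X = fa Q + (fa P - fa Q) * ((1/2 - fb Q) / (fb P - fb Q))].
      by apply: seg => //; rewrite ?fbQ ?fbP; lra.
    by exists X; split => //; split => // ?; lra.
  have [X [LX fX aX]] : exists X, [/\ L X, fb X = 1/2 &
      fa X = fa Rr + (fa Q - fa Rr) * ((1/2 - fb Rr) / (fb Q - fb Rr))].
    by apply: seg => //; rewrite ?fbR ?fbQ; lra.
  by exists X; split => //; split => // ?; lra.
exists Xp, Xm; split => //.
case: aXm => aXm1 aXm2; case: aXp => aXp1 aXp2.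
have [hc2|hc2] := lerP (-(1/2)) c; have [hb2|hb2] := lerP b (1/2).
- rewrite (aXm1 hc2) (aXp1 hb2) faR fbR faPm fbPm faQ fbQ faP fbP.
  have -> : 1 + (a - 1) * ((1 / 2 - b) / (1 - b)) +
     (- a + (1 + c - - a) * ((- (1 / 2) - -1) / (c - -1))) = 1 + 
     (b * (1 + c) - a * (b + c)) / (2 * (1 - b) * (1 + c)) by field; lra.
  rewrite lerDl divr_ge0 //; last by nra.
  have [hbc|hbc] := lerP (b + c) 0; first by nra.
  have -> : b * (1 + c) - a * (b + c) = (1 - a) * (b + c) + (- c) * (1 - b) by ring.
  by apply: addr_ge0; apply: mulr_ge0; lra.
- rewrite (aXm1 hc2) (aXp2 hb2) faR fbR faPm fbPm faQ fbQ.
  have -> : 1 + c + (1 - (1 + c)) * ((1 / 2 - c) / (b - c)) +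
     (- a + (1 + c - - a) * ((- (1 / 2) - -1) / (c - -1))) = 1 + 
     ((1 - a) * (b - c) * (1 + 2 * c) + c * (b * (1 + 2 * c) - 1)) / (2 * (b - c) * (1 + c)) by field; lra.
  rewrite lerDl divr_ge0 //; last by nra.
  apply: addr_ge0; first by apply: mulr_ge0; [apply: mulr_ge0|]; lra.
  by apply: mulr_le0; [lra|nra].
- rewrite (aXm2 hc2) (aXp1 hb2) faR fbR faQ fbQ faP fbP.
  have -> : 1 + (a - 1) * ((1 / 2 - b) / (1 - b)) +
     (1 + c + (1 - (1 + c)) * ((- (1 / 2) - c) / (b - c))) = 1 +
     (b * (1 + c * (1 - 2 * b)) + a * (1 - 2 * b) * (b - c)) / (2 * (1 - b) * (b - c)) by field; lra.
  rewrite lerDl divr_ge0 //; last by nra.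
  apply: addr_ge0; first by apply: mulr_ge0; nra.
  by apply: mulr_ge0; [apply: mulr_ge0|]; lra.
- rewrite (aXm2 hc2) (aXp2 hb2) faR fbR faQ fbQ.
  have -> : 1 + c + (1 - (1 + c)) * ((1 / 2 - c) / (b - c)) +
     (1 + c + (1 - (1 + c)) * ((- (1 / 2) - c) / (b - c))) = 1 +
     (b - c + 2 * b * c) / (b - c) by field; lra.
  rewrite lerDl divr_ge0 //; nra.
Qed.

End P1.

Section P2.
Variable R : realType.
Notation pt := (R * R)%type.

Definition dotz (u : int * int) (x : pt) : R := u.1%:~R * x.1 + u.2%:~R * x.2.

Lemma lin_dotz u : lin (dotz u).
Proof. by split => [th U V|x]; rewrite /dotz /=; ring. Qed.

Lemma cover (L : set pt) (W v b b2 : int * int) Rp Rm :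
  cvx L -> symm L ->
  (forall X : pt, X.1 = dotz W X * b.1%:~R + dotz v X * b2.1%:~R /\
                  X.2 = dotz W X * b.2%:~R + dotz v X * b2.2%:~R) ->
  L Rp -> L Rm -> dotz v Rp = 1/2 -> dotz v Rm = -(1/2) -> 1 <= dotz W Rp + dotz W Rm ->
  forall y : pt, exists z : int * int, L (y.1 - z.1%:~R, y.2 - z.2%:~R).
Proof.
move=> cL sL exp LRp LRm vp vm D1 y.
have [laW lnW] := lin_dotz W; have [lav lnv] := lin_dotz v.
set j := Num.floor (dotz v y + 1/2).
have j1 := floor_le (dotz v y + 1/2); have j2 := floorD1_gt (dotz v y + 1/2).
rewrite -/j intrD in j1 j2.
set th := dotz v y + 1/2 - j%:~R.
have th0 : 0 <= th by rewrite /th; lra.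
have th1 : th <= 1 by rewrite /th; lra.
set X1 := cmb th (negp Rp) (negp Rm).
set X2 := cmb th Rm Rp.
have LX1 : L X1 by apply: cL => //; apply: sL.
have LX2 : L X2 by apply: cL.
have bX1 : dotz v X1 = dotz v y - j%:~R.
  rewrite /X1 lav !lnv vp vm /th; field; lra.
have bX2 : dotz v X2 = dotz v y - j%:~R by rewrite /X2 lav vp vm /th; field; lra.
have aX1 : dotz W X1 = - ((1 - th) * dotz W Rp + th * dotz W Rm).
  rewrite /X1 laW !lnW; ring.
have aX2 : dotz W X2 = (1 - th) * dotz W Rm + th * dotz W Rp by rewrite /X2 laW; ring.
set u := dotz W X2 - dotz W y.
set m := - Num.floor u.
have m1 := floor_le u; have m2 := floorD1_gt u.
rewrite intrD in m2.
have mE : m%:~R = - (Num.floor u)%:~R :> R by rewrite /m intrN.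
set D := dotz W Rp + dotz W Rm.
have DE : dotz W X2 - dotz W X1 = D by rewrite aX1 aX2 /D; ring.
set lam := (dotz W y - m%:~R - dotz W X1) / D.
have D0 : 0 < D by rewrite /D; lra.
have lam0 : 0 <= lam.
  rewrite /lam divr_ge0 //; last by lra.
  rewrite mE /u in m1 m2 *; lra.
have lam1 : lam <= 1.
  rewrite /lam ler_pdivrMr // mul1r.
  rewrite mE /u in m1 m2 *; lra.
set Y := cmb lam X1 X2.
have LY : L Y by apply: cL.
have aY : dotz W Y = dotz W y - m%:~R.
  rewrite /Y laW.
  have -> : (1 - lam) * dotz W X1 + lam * dotz W X2 = dotz W X1 + lam * (dotz W X2 - dotz W X1) by ring.
  rewrite DE /lam; field; lra.
have bY : dotz v Y = dotz v y - j%:~R by rewrite /Y lav bX1 bX2; ring.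
exists (m * b.1 + j * b2.1, m * b.2 + j * b2.2).
have [ey1 ey2] := exp y; have [eY1 eY2] := exp Y.
have -> : (y.1 - (m * b.1 + j * b2.1)%:~R, y.2 - (m * b.2 + j * b2.2)%:~R) = Y.
  rewrite [Y in _ = Y]surjective_pairing; congr pair.
    by rewrite eY1 aY bY ey1 !intrD !intrM; ring.
  by rewrite eY2 aY bY ey2 !intrD !intrM; ring.
exact: LY.
Qed.

End P2.

Section P3.
Variable R : realType.
Notation pt := (R * R)%type.

Lemma fin_min (T : finType) (P : pred T) (F : T -> R) i0 : P i0 ->
  exists2 i, P i & forall j, P j -> F i <= F j.
Proof. by move=> Pi0; case: (arg_minP F Pi0) => i Pi Hi; exists i. Qed.

Definition decz (N : nat) (i : 'I_(2 * N).+1 * 'I_(2 * N).+1) : int * int :=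
  ((i.1 : nat)%:Z - N%:Z, (i.2 : nat)%:Z - N%:Z).
Definition encz (N : nat) (u : int * int) : 'I_(2 * N).+1 * 'I_(2 * N).+1 :=
  (inord (absz (u.1 + N%:Z)), inord (absz (u.2 + N%:Z))).

Lemma decK (N : nat) (u : int * int) : `|u.1| <= N%:Z -> `|u.2| <= N%:Z ->
  decz (encz N u) = u.
Proof.
move=> h1 h2; rewrite /decz /encz /=.
case: u h1 h2 => u1 u2 /= h1 h2.
have e1 : ((inord (absz (u1 + N%:Z)) : 'I_(2 * N).+1) : nat) = absz (u1 + N%:Z).
  by apply: inordK; lia.
have e2 : ((inord (absz (u2 + N%:Z)) : 'I_(2 * N).+1) : nat) = absz (u2 + N%:Z).
  by apply: inordK; lia.
rewrite e1 e2; congr pair; lia.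
Qed.

Lemma int_box_min (N : nat) (P : int * int -> Prop) (F : int * int -> R) u0 :
  P u0 -> (forall u, P u -> `|u.1| <= N%:Z /\ `|u.2| <= N%:Z) ->
  exists u, P u /\ forall v, P v -> F u <= F v.
Proof.
move=> Pu0 bP.
have [b1 b2] := bP _ Pu0.
have Pe : `[< P (decz (encz N u0)) >] by apply/asboolP; rewrite decK.
have [i Pi Hi] := @fin_min ('I_(2 * N).+1 * 'I_(2 * N).+1)%type (fun i => `[< P (decz i) >]) (fun i => F (decz i)) _ Pe.
exists (decz i); split; first exact/asboolP.
move=> v Pv; have [c1 c2] := bP _ Pv.
rewrite -(decK c1 c2); apply: Hi; apply/asboolP; by rewrite decK.
Qed.

Lemma box_choose (N : nat) (Q : int * int -> pt -> Prop) :
  (forall u, `|u.1| <= N%:Z -> `|u.2| <= N%:Z -> exists x, Q u x) ->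
  exists M, forall u, `|u.1| <= N%:Z -> `|u.2| <= N%:Z ->
     exists x, [/\ Q u x, `|x.1| <= M & `|x.2| <= M].
Proof.
move=> hQ.
have ex : forall u : int * int, exists x : pt, `|u.1| <= N%:Z -> `|u.2| <= N%:Z -> Q u x.
  move=> u; have [[h1 h2]|] := pselect (`|u.1| <= N%:Z /\ `|u.2| <= N%:Z).
    by have [x Qx] := hQ _ h1 h2; exists x.
  by move=> nh; exists (0, 0) => h1 h2; exfalso; apply: nh.
have [f fP] := choice ex.
exists (\big[Order.max/0]_(i : 'I_(2 * N).+1 * 'I_(2 * N).+1)
          (`|(f (decz i)).1| + `|(f (decz i)).2|)).
move=> u h1 h2; exists (f u); split; first exact: fP.
  rewrite -(decK h1 h2); apply: le_trans (le_bigmax _ _ (encz N u)).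
  by rewrite lerDl.
rewrite -(decK h1 h2); apply: le_trans (le_bigmax _ _ (encz N u)).
by rewrite lerDr.
Qed.

Lemma cont_dot (u : int * int) : continuous (@dotz R u).
Proof. move=> x; apply: cvgD; apply: cvgMl_tmp; [exact: cvg_fst | exact: cvg_snd]. Qed.

Lemma cpt (L : set pt) (M : R) : closed L ->
  (forall x, L x -> `|x.1| <= M /\ `|x.2| <= M) -> compact L.
Proof.
move=> cL bL.
have -> : L = (`[-M, M] `*` `[-M, M]) `&` L.
  apply/seteqP; split => x //=; last by case.
  move=> Lx; split => //; have [h1 h2] := bL _ Lx; split => /=; rewrite in_itv /= -ler_norml //.
apply: compact_closedI => //.
by apply: compact_setX; exact: segment_compact.
Qed.

Definition hw (L : set pt) (u : int * int) : R := sup [set dotz u x | x in L].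

Lemma hwP (L : set pt) u : compact L -> L !=set0 ->
  (forall x, L x -> dotz u x <= hw L u) /\ exists2 x, L x & dotz u x = hw L u.
Proof.
move=> cL L0.
have [c cL' cmax] := compact_EVT_max L0 cL (continuous_subspaceT (@cont_dot u)).
have Lc : L c by rewrite inE in cL'.
have ub : ubound [set dotz u x | x in L] (dotz u c).
  by move=> _ [x Lx <-]; apply: cmax; rewrite inE.
have e : hw L u = dotz u c.
  apply/eqP; rewrite eq_le; apply/andP; split.
    by apply: ge_sup => //; exists (dotz u c), c.
  apply: sup_upper_bound; last by exists c.
  by split; [exists (dotz u c), c | exists (dotz u c)].
split; last by exists c.
by move=> x Lx; rewrite e; apply: cmax; rewrite inE.
Qed.

End P3.

Section P4.
Variable R : realType.
Notation pt := (R * R)%type.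

Lemma dotz_sc (u : int * int) s (X : pt) : dotz u (cmb s (0,0) X) = s * dotz u X.
Proof. by rewrite /dotz /=; ring. Qed.

Lemma ball_wit (L : set pt) (rho : R) (u : int * int) : 0 < rho ->
  (forall x : pt, `|x.1| <= rho -> `|x.2| <= rho -> L x) ->
  exists2 x, L x & dotz u x = rho * (`|u.1%:~R| + `|u.2%:~R|).
Proof.
move=> r0 bL.
have [h1|h1] := lerP 0 (u.1%:~R : R); have [h2|h2] := lerP 0 (u.2%:~R : R).
- exists (rho, rho); first by apply: bL; rewrite /= gtr0_norm.
  by rewrite /dotz /= (ger0_norm h1) (ger0_norm h2); ring.
- exists (rho, - rho); first by apply: bL; rewrite /= ?normrN gtr0_norm.
  by rewrite /dotz /= (ger0_norm h1) (ltr0_norm h2); ring.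
- exists (- rho, rho); first by apply: bL; rewrite /= ?normrN gtr0_norm.
  by rewrite /dotz /= (ltr0_norm h1) (ger0_norm h2); ring.
- exists (- rho, - rho); first by apply: bL; rewrite /= ?normrN gtr0_norm.
  by rewrite /dotz /= (ltr0_norm h1) (ltr0_norm h2); ring.
Qed.

Lemma cov_bdd (L : set pt) (rho : R) :
  compact L -> cvx L -> symm L -> 0 < rho ->
  (forall x : pt, `|x.1| <= rho -> `|x.2| <= rho -> L x) ->
  (forall u : int * int, u != (0,0) -> exists2 x, L x & 1 <= dotz u x) ->
  forall y : pt, exists z : int * int, L (y.1 - z.1%:~R, y.2 - z.2%:~R).
Proof.
move=> cL cvL sL rho0 ballL wid.
have L0 : L (0,0) by apply: ballL; rewrite /= normr0 ltW.
have Ln : L !=set0 by exists (0,0).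
pose h := hw L.
have hub u x : L x -> dotz u x <= h u := (hwP u cL Ln).1 x.
have hat u : exists2 x, L x & dotz u x = h u := (hwP u cL Ln).2.
have h1 u : u != (0,0) -> 1 <= h u.
  by move=> /wid [x Lx] /le_trans; apply; exact: hub.
have hball u : rho * (`|u.1%:~R| + `|u.2%:~R|) <= h u.
  by have [x Lx <-] := ball_wit u rho0 ballL; exact: hub.
set H0 := h (1,0).
set N := (Num.truncn (H0 / rho)).+1.
have HN : H0 < rho * N%:R.
  by rewrite -ltr_pdivrMl // mulrC; exact: truncnS_gt.
have bnd : forall u, (u != (0,0) /\ h u <= H0) -> `|u.1| <= N%:Z /\ `|u.2| <= N%:Z.
  move=> u [_ hu]; have := hball u => hb.
  have hu1 : `|u.1%:~R : R| + `|u.2%:~R : R| < N%:R.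
    by rewrite -(ltr_pM2l rho0); apply: le_lt_trans HN; apply: le_trans hu.
  have n1 : 0 <= `|u.1%:~R : R| by [].
  have n2 : 0 <= `|u.2%:~R : R| by [].
  split; rewrite -(ler_int R) intr_norm; apply: ltW.
    by apply: le_lt_trans hu1; rewrite lerDl.
  by apply: le_lt_trans hu1; rewrite lerDr.
have [u0 [[u0nz u0le] u0min]] := @int_box_min R N (fun u => u != (0,0) /\ h u <= H0) h (1,0)
   (conj isT (lexx _)) bnd.
have hmin0 v : v != (0,0) -> h u0 <= h v.
  move=> vnz; have [hv|hv] := lerP (h v) H0; first by apply: u0min.
  by apply: le_trans (ltW hv).
case: u0 u0nz u0le u0min hmin0 => m1 m2 u0nz _ _ hmin0.
set g := gcdz m1 m2.
have gnz : g != 0.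
  by rewrite gcdz_eq0; apply: contra u0nz => /andP[/eqP-> /eqP->].
have [e1 [e2 bz]] := Bezoutz m1 m2.
set v1 := (m1 %/ g)%Z; set v2 := (m2 %/ g)%Z.
have em1 : v1 * g = m1 := divzK (dvdz_gcdl m1 m2).
have em2 : v2 * g = m2 := divzK (dvdz_gcdr m1 m2).
have bez : e1 * v1 + e2 * v2 = 1.
  by apply: (mulIf gnz); rewrite mulrDl -!mulrA em1 em2 bz mul1r.
have vnz : (v1, v2) != (0,0).
  apply/eqP => -[a b]; move: bez; rewrite a b !mulr0 addr0 => /eqP.
  by rewrite eq_sym oner_eq0.
have g1 : 1 <= (g%:~R : R).
  rewrite ler1z; have g0 : 0 <= g by rewrite /g /gcdz.
  by move: gnz g0; clearbody g; lia.
have hvle : h (v1, v2) <= h (m1, m2).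
  have [x Lx hx] := hat (v1, v2).
  have e : dotz (m1, m2) x = g%:~R * dotz (v1, v2) x.
    by rewrite /dotz /= -em1 -em2 !intrM; ring.
  have := hub (m1, m2) x Lx; rewrite e hx => hh.
  have := h1 _ vnz; nra.
have vmin w : w != (0,0) -> h (v1, v2) <= h w.
  by move=> wnz; apply: le_trans hvle (hmin0 w wnz).
clearbody v1 v2.
have [lnv1 lnv2] := @lin_dotz R (v1, v2).
set H := h (v1, v2).
have H1 : 1 <= H := h1 _ vnz.
have Hp : 0 < H by apply: lt_le_trans H1; exact: ltr01.
have [p Lp pH] := hat (v1, v2).
have {}pH : dotz (v1, v2) p = H by rewrite pH.
set k := Num.floor (dotz (- e2, e1) p / H).
set W := (- e2 - k * v1, e1 - k * v2).
set WV := (W.1 - v1, W.2 - v2).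
have Wb : W.1 * (- v2) + W.2 * v1 = 1.
  by rewrite -bez /W /=; ring.
have WVb : WV.1 * (- v2) + WV.2 * v1 = 1.
  by rewrite -Wb /WV /=; ring.
have Wnz : W != (0,0).
  apply/eqP => We; move: Wb; rewrite We /= !mul0r addr0 => /eqP.
  by rewrite eq_sym oner_eq0.
have WVnz : WV != (0,0).
  apply/eqP => We; move: WVb; rewrite We /= !mul0r addr0 => /eqP.
  by rewrite eq_sym oner_eq0.
have [q Lq qh] := hat W.
have qH : H <= dotz W q by rewrite qh; apply: vmin.
have [r Lr rh] := hat WV.
have rH : H <= dotz WV r by rewrite rh; apply: vmin.
have vb x : L x -> - H <= dotz (v1, v2) x <= H.
  move=> Lx; rewrite hub // andbT.
  by have := hub (v1, v2) _ (sL _ Lx); rewrite lnv2 lerNl.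
have dW x : dotz W x = dotz (- e2, e1) x - k%:~R * dotz (v1, v2) x.
  by rewrite /dotz /W /= !(intrD, intrN, intrM); ring.
have dWV x : dotz WV x = dotz W x - dotz (v1, v2) x.
  by rewrite /dotz /WV /= !(intrD, intrN, intrM); ring.
set a := dotz W p / H.
have aE : a = dotz (- e2, e1) p / H - k%:~R.
  by rewrite /a dW pH; field; rewrite gt_eqF.
have ka := floor_le (dotz (- e2, e1) p / H).
have kb := floorD1_gt (dotz (- e2, e1) p / H).
rewrite -/k intrD in ka kb.
have a0 : 0 <= a by rewrite aE; lra.
have a1 : a <= 1 by rewrite aE; lra.
have thin th X : L X -> 0 <= th -> th <= 1 -> L (cmb th (0,0) X).
  by move=> LX t0 t1; apply: cvL.
set P := cmb (1 / H) (0,0) p.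
have LP : L P by apply: thin => //; [rewrite divr_ge0 // ltW | rewrite ler_pdivrMr // mul1r].
have fbP : dotz (v1, v2) P = 1 by rewrite dotz_sc pH; field; rewrite gt_eqF.
have faP : dotz W P = a by rewrite dotz_sc /a; field; rewrite gt_eqF.
have dqp : 0 < (dotz W q) by apply: lt_le_trans qH.
set Q := cmb (1 / (dotz W q)) (0,0) q.
have LQ : L Q by apply: thin => //; [rewrite divr_ge0 // ltW | rewrite ler_pdivrMr // mul1r; lra].
have faQ : dotz W Q = 1 by rewrite dotz_sc; field; rewrite gt_eqF.
set bb := dotz (v1, v2) q / (dotz W q).
have fbQ : dotz (v1, v2) Q = bb by rewrite dotz_sc /bb; field; rewrite gt_eqF.
have [vq1 vq2] : - H <= dotz (v1, v2) q /\ dotz (v1, v2) q <= H by apply/andP; apply: vb.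
have b0 : -1 <= bb by rewrite /bb ler_pdivlMr //; lra.
have b1 : bb <= 1 by rewrite /bb ler_pdivrMr //; lra.
have drp : 0 < (dotz WV r) by apply: lt_le_trans rH.
set Rr := cmb (1 / (dotz WV r)) (0,0) r.
have LR : L Rr by apply: thin => //; [rewrite divr_ge0 // ltW | rewrite ler_pdivrMr // mul1r; lra].
set cc := dotz (v1, v2) r / (dotz WV r).
have fbR : dotz (v1, v2) Rr = cc by rewrite dotz_sc /cc; field; rewrite gt_eqF.
have faR : dotz W Rr = 1 + cc.
  have : dotz WV Rr = 1 by rewrite dotz_sc; field; rewrite gt_eqF.
  by rewrite dWV fbR => e; rewrite -e; ring.
have [vr1 vr2] : - H <= dotz (v1, v2) r /\ dotz (v1, v2) r <= H by apply/andP; apply: vb.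
have c0 : -1 <= cc by rewrite /cc ler_pdivlMr //; lra.
have c1 : cc <= 1 by rewrite /cc ler_pdivrMr //; lra.
have [Rp [Rm [LRp LRm fbp fbm D1]]] := chord cvL sL (@lin_dotz R W) (@lin_dotz R (v1, v2))
   LP LQ LR fbP faP a0 a1 faQ fbQ b0 b1 faR fbR c0 c1.
have bezR : (e1%:~R * v1%:~R + e2%:~R * v2%:~R : R) = 1 by rewrite -!intrM -intrD bez.
have key (t : R) : t = t * (e1%:~R * v1%:~R + e2%:~R * v2%:~R) by rewrite bezR mulr1.
apply: (cover (W:=W) (v:=(v1,v2)) (b:=(-v2,v1)) (b2:=(e1 - k*v2, e2 + k*v1)) cvL sL _ LRp LRm fbp fbm D1).
move=> X; split; rewrite /dotz /W /= !(intrD, intrN, intrM).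
  by rewrite {1}(key X.1); ring.
by rewrite {1}(key X.2); ring.
Qed.

End P4.

Section P5.
Variable R : realType.
Notation pt := (R * R)%type.

Lemma cov (L : set pt) (rho : R) :
  closed L -> cvx L -> symm L -> 0 < rho ->
  (forall x : pt, `|x.1| <= rho -> `|x.2| <= rho -> L x) ->
  (forall u : int * int, u != (0,0) -> exists2 x, L x & 1 <= dotz u x) ->
  forall y : pt, exists z : int * int, L (y.1 - z.1%:~R, y.2 - z.2%:~R).
Proof.
move=> clL cvL sL r0 ballL wid.
set N := (Num.truncn (1 / rho)).+1.
have hN : 1 < rho * N%:R.
  by rewrite -ltr_pdivrMl // mulr1 -[X in X < _]mul1r; exact: truncnS_gt.
have hQ : forall u : int * int, `|u.1| <= N%:Z -> `|u.2| <= N%:Z ->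
    exists x : pt, (u != (0,0) -> L x /\ 1 <= dotz u x).
  move=> u _ _; have [unz|uz] := boolP (u != (0,0)).
    by have [x Lx hx] := wid u unz; exists x.
  by exists (0,0) => unz; exfalso; move/negP: uz; apply.
have [M0 HM] := box_choose hQ.
set M := `|M0| + rho.
have M0M : M0 <= M by rewrite /M; apply: le_trans (ler_norm M0) _; rewrite lerDl ltW.
have rM : rho <= M by rewrite /M lerDr.
set B : set pt := `[-M, M] `*` `[-M, M].
have inB x : B x <-> (`|x.1| <= M /\ `|x.2| <= M).
  by rewrite /B /= !in_itv /= -!ler_norml.
set L' := B `&` L.
have cL' : compact L'.
  by apply: compact_closedI => //; apply: compact_setX; exact: segment_compact.
have nb (a1 b1 t : R) : 0 <= t -> t <= 1 -> `|a1| <= M -> `|b1| <= M -> `|(1-t)*a1 + t*b1| <= M.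
  move=> t0 t1 ha hb; apply: le_trans (ler_normD _ _) _.
  rewrite !normrM (ger0_norm t0) ger0_norm ?subr_ge0 //.
  have e1 : (1 - t) * `|a1| <= (1 - t) * M by rewrite ler_wpM2l // subr_ge0.
  have e2 : t * `|b1| <= t * M by rewrite ler_wpM2l.
  apply: le_trans (lerD e1 e2) _; lra.
have cvL' : cvx L'.
  move=> U V th [/inB [U1 U2] LU] [/inB [V1 V2] LV] t0 t1; split; last exact: cvL.
  by apply/inB; split; apply: nb.
have sL' : symm L'.
  move=> x [/inB [x1 x2] Lx]; split; last exact: sL.
  by apply/inB; rewrite /negp /= !normrN.
have ballL' : forall x : pt, `|x.1| <= rho -> `|x.2| <= rho -> L' x.
  move=> x h1 h2; split; last exact: ballL.
  by apply/inB; split; apply: le_trans rM.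
have wid' : forall u : int * int, u != (0,0) -> exists2 x, L' x & 1 <= dotz u x.
move=> u unz.
have [h1|h1] := lerP `|u.1| N%:Z; have [h2|h2] := lerP `|u.2| N%:Z.
- have [x [Qx x1 x2]] := HM u h1 h2.
  have [Lx hx] := Qx unz.
  exists x => //; split => //; apply/inB; split; exact: le_trans M0M.
- have [x Lx hx] := ball_wit u r0 ballL'; exists x => //; rewrite hx.
  apply: le_trans (ltW hN) _; rewrite ler_pM2l //.
  have hu : (N%:R : R) <= `|u.2%:~R| by rewrite -intr_norm -[(N%:R : R)]/((N%:Z)%:~R) ler_int ltW.
  by apply: le_trans hu _; rewrite lerDr.
- have [x Lx hx] := ball_wit u r0 ballL'; exists x => //; rewrite hx.
  apply: le_trans (ltW hN) _; rewrite ler_pM2l //.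
  have hu : (N%:R : R) <= `|u.1%:~R| by rewrite -intr_norm -[(N%:R : R)]/((N%:Z)%:~R) ler_int ltW.
  by apply: le_trans hu _; rewrite lerDl.
- have [x Lx hx] := ball_wit u r0 ballL'; exists x => //; rewrite hx.
  apply: le_trans (ltW hN) _; rewrite ler_pM2l //.
  have hu : (N%:R : R) <= `|u.1%:~R| by rewrite -intr_norm -[(N%:R : R)]/((N%:Z)%:~R) ler_int ltW.
  by apply: le_trans hu _; rewrite lerDl.
move=> y; have [z [_ Lz]] := cov_bdd cL' cvL' sL' r0 ballL' wid' y.
by exists z.
Qed.

End P5.

Section P6.
Variable R : realType.
Notation pt := (R * R)%type.

Lemma contphi (c1 c2 s : R) : continuous (fun x : pt => (c1 + s * x.1, c2 + s * x.2)).
Proof.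
move=> x; apply: (@cvg_pair _ _ _ _ (nbhs (c1 + s * x.1)) (nbhs (c2 + s * x.2)) _ _ _
   (fun x : R*R => c1 + s * x.1) (fun x : R*R => c2 + s * x.2)).
  by apply: cvgD; [exact: cvg_cst | apply: cvgMl_tmp; exact: cvg_fst].
by apply: cvgD; [exact: cvg_cst | apply: cvgMl_tmp; exact: cvg_snd].
Qed.

Lemma intbox (K : set pt) (x0 : pt) : (interior K) x0 ->
  exists2 e : R, 0 < e & forall y : pt, `|y.1 - x0.1| < e -> `|y.2 - x0.2| < e -> K y.
Proof.
move=> /nbhs_ballP [e e0 he]; exists e => // y h1 h2; apply: he.
split => /=; rewrite -ball_normE /ball_ /= distrC //.
Qed.

Lemma wid_line (K : set pt) (c : pt) (t : R) (u : int * int) :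
  (forall k, K k -> K (2 * c.1 - k.1, 2 * c.2 - k.2)) ->
  (forall p v : pt, v != (0, 0) -> line p v `&` scaled_translates t K !=set0) ->
  u != (0,0) -> exists2 k, K k & 1/2 <= t * dotz u (k.1 - c.1, k.2 - c.2).
Proof.
move=> refl hline unz.
set u1 : R := u.1%:~R; set u2 : R := u.2%:~R.
set n2 : R := u1 ^+ 2 + u2 ^+ 2.
have sq (x : R) : x != 0 -> 0 < x ^+ 2 by move=> h; rewrite lt0r sqrf_eq0 h sqr_ge0.
have n2p : 0 < n2.
  have [e1|e1] := eqVneq u.1 0.
    have e2 : u.2 != 0 by apply: contra unz; case: u e1 {u1 u2 n2} => a b /= -> /eqP ->.
    have h : 0 < u2 ^+ 2 by apply: sq; rewrite intr_eq0.
    have h' := sqr_ge0 u1; rewrite /n2; lra.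
  have h : 0 < u1 ^+ 2 by apply: sq; rewrite intr_eq0.
  have h' := sqr_ge0 u2; rewrite /n2; lra.
set al := (1/2 + t * dotz u c) / n2.
have vnz : ((- u2, u1) : pt) != (0,0).
  apply: contra unz => /eqP [] /eqP; rewrite oppr_eq0 intr_eq0 => /eqP h2 /eqP.
  by rewrite intr_eq0 => /eqP h1; apply/eqP; case: u {u1 u2 n2 al n2p} h1 h2 => a b /= -> ->.
have [X [[s _ eX] [k Kk [z [m [n ez]] eX2]]]] := hline (al * u1, al * u2) _ vnz.
rewrite -eX ez /add_pt /scale_pt /= in eX2.
case: eX2 => e1 e2.
have alE : al * n2 = 1/2 + t * dotz u c by rewrite /al; field; rewrite gt_eqF.
have E : al * n2 = u1 * (t * k.1 + m%:~R) + u2 * (t * k.2 + n%:~R).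
  by rewrite e1 e2 /n2; ring.
have eq : t * dotz u (k.1 - c.1, k.2 - c.2) = 1/2 - (u.1 * m + u.2 * n)%:~R.
  move: alE E; rewrite /dotz /= intrD !intrM -/u1 -/u2 => -> E; lra.
have [j0|j0] := lerP (u.1 * m + u.2 * n) 0.
  exists k => //; rewrite eq.
  have : ((u.1 * m + u.2 * n)%:~R : R) <= 0 by rewrite lerz0.
  lra.
exists (2 * c.1 - k.1, 2 * c.2 - k.2); first exact: refl.
have -> : t * dotz u ((2 * c.1 - k.1, 2 * c.2 - k.2).1 - c.1, (2 * c.1 - k.1, 2 * c.2 - k.2).2 - c.2)
   = - (t * dotz u (k.1 - c.1, k.2 - c.2)) by rewrite /dotz /=; ring.
rewrite eq; have : 1 <= (u.1 * m + u.2 * n)%:~R :> R by rewrite ler1z.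
lra.
Qed.

Lemma KL (K : set pt) (t : R) : closed K -> convex_set2 K -> interior K !=set0 ->
  centrally_symmetric K -> 0 <= t ->
  (forall p v : pt, v != (0, 0) -> line p v `&` scaled_translates t K !=set0) ->
  scaled_translates (2 * t) K = [set: pt].
Proof.
move=> clK cvK [x0 ix0] [c hK] t0 hline.
have refl k : K k -> K (2 * c.1 - k.1, 2 * c.2 - k.2) by move=> Kk; rewrite hK; exists k.
have wid := wid_line refl hline.
have tp : 0 < t.
  have [k _ hk] := wid (1, 0) isT.
  rewrite lt_def t0 andbT; apply/eqP => t00; move: hk; rewrite t00 mul0r; lra.
set s := 1 / (2 * t).
have s2t : s * (2 * t) = 1 by rewrite /s; field; rewrite gt_eqF.
have sp : 0 < s by rewrite /s divr_gt0 // mulr_gt0.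
set L : set pt := [set x | K (c.1 + s * x.1, c.2 + s * x.2)].
have clL : closed L.
  have -> : L = (fun x : pt => (c.1 + s * x.1, c.2 + s * x.2)) @^-1` K by [].
  by apply: preimage_closed => // x _; apply: contphi.
have cvL : cvx L.
  move=> U V th LU LV th0 th1; rewrite /L /=.
  have := cvK _ _ LU LV th th0 th1.
  congr K; rewrite /add_pt /scale_pt /=; congr pair; ring.
have sL : symm L.
  move=> x Lx; have := refl _ Lx; rewrite /L /=; congr K; congr pair; ring.
have [e e0 he] := intbox ix0.
have boxc y : `|y.1 - c.1| < e -> `|y.2 - c.2| < e -> K y.
  move=> h1 h2.
  have KA : K (y.1 + x0.1 - c.1, y.2 + x0.2 - c.2).
    by apply: he; rewrite /=; [have -> : y.1 + x0.1 - c.1 - x0.1 = y.1 - c.1 by ring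
                                |have -> : y.2 + x0.2 - c.2 - x0.2 = y.2 - c.2 by ring].
  have KB : K (c.1 - y.1 + x0.1, c.2 - y.2 + x0.2).
    apply: he; rewrite /=.
      have ee : c.1 - y.1 + x0.1 - x0.1 = - (y.1 - c.1) by ring.
      by rewrite ee normrN.
    have ee : c.2 - y.2 + x0.2 - x0.2 = - (y.2 - c.2) by ring.
    by rewrite ee normrN.
  have KB' := refl _ KB.
  have := cvK _ _ KA KB' (1/2) _ _; rewrite /add_pt /scale_pt /=.
  have -> : (1 - 1 / 2) * (y.1 + x0.1 - c.1) + 1 / 2 * (2 * c.1 - (c.1 - y.1 + x0.1)) = y.1 by field.
  have -> : (1 - 1 / 2) * (y.2 + x0.2 - c.2) + 1 / 2 * (2 * c.2 - (c.2 - y.2 + x0.2)) = y.2 by field.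
  rewrite -surjective_pairing; apply; lra.
have ballL : forall x : pt, `|x.1| <= t * e -> `|x.2| <= t * e -> L x.
  move=> x h1 h2; apply: boxc; rewrite /=.
    have -> : c.1 + s * x.1 - c.1 = s * x.1 by ring.
    rewrite normrM (gtr0_norm sp); apply: le_lt_trans (ler_wpM2l (ltW sp) h1) _.
    rewrite /s; have -> : 1 / (2 * t) * (t * e) = e / 2 by field; rewrite gt_eqF.
    lra.
  have -> : c.2 + s * x.2 - c.2 = s * x.2 by ring.
  rewrite normrM (gtr0_norm sp); apply: le_lt_trans (ler_wpM2l (ltW sp) h2) _.
  rewrite /s; have -> : 1 / (2 * t) * (t * e) = e / 2 by field; rewrite gt_eqF.
  lra.
have widL : forall u : int * int, u != (0,0) -> exists2 x, L x & 1 <= dotz u x.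
  move=> u unz; have [k Kk hk] := wid u unz.
  exists (2 * t * (k.1 - c.1), 2 * t * (k.2 - c.2)).
    rewrite /L /=; have -> : c.1 + s * (2 * t * (k.1 - c.1)) = k.1.
      by rewrite mulrA s2t mul1r; ring.
    have -> : c.2 + s * (2 * t * (k.2 - c.2)) = k.2.
      by rewrite mulrA s2t mul1r; ring.
    by rewrite -surjective_pairing.
  have -> : dotz u (2 * t * (k.1 - c.1), 2 * t * (k.2 - c.2)) = 2 * (t * dotz u (k.1 - c.1, k.2 - c.2)).
    by rewrite /dotz /=; ring.
  lra.
have tep : 0 < t * e by rewrite mulr_gt0.
have cv := cov clL cvL sL tep ballL widL.
apply/seteqP; split => // y0 _.
have [[m n] Lz] := cv (y0.1 - 2 * t * c.1, y0.2 - 2 * t * c.2).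
rewrite /L /= in Lz.
exists (c.1 + s * (y0.1 - 2 * t * c.1 - m%:~R), c.2 + s * (y0.2 - 2 * t * c.2 - n%:~R)) => //.
exists (m%:~R, n%:~R); first by exists m, n.
rewrite /add_pt /scale_pt /=.
rewrite [RHS]surjective_pairing; congr pair.
  by rewrite /s; field; rewrite gt_eqF.
by rewrite /s; field; rewrite gt_eqF.
Qed.

End P6.

Theorem theorem5 (R : realType) (K : set (R * R)%type) :
  closed K -> convex_set2 K -> interior K !=set0 -> centrally_symmetric K ->
  mu2 K <= 2 * mu1 K.
Proof.
move=> clK cvK iK sK.
rewrite /mu1 /mu2.
set S2 := [set t : R | 0 <= t /\ _].
set S1 := [set t : R | 0 <= t /\ _].
have key t : S1 t -> S2 (2 * t).
  move=> [t0 ht]; split; first by rewrite mulr_ge0.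
  exact: KL.
have sub t : S2 t -> S1 t.
  move=> [t0 ht]; split => // p v _; exists p; split.
    by exists 0 => //; rewrite /add_pt /scale_pt /= !mul0r !addr0 -surjective_pairing.
  by rewrite ht.
have [S1n|S1e] := pselect (S1 !=set0).
  have hS2 : has_lbound S2 by exists 0 => x [].
  have h : lbound S1 (inf S2 / 2).
    move=> t St; have := ge_inf hS2 (key t St); lra.
  have := lb_le_inf S1n h; lra.
have e1 : S1 = set0 by apply/seteqP; split => // t St; apply: S1e; exists t.
have e2 : S2 = set0 by apply/seteqP; split => // t St; apply: S1e; exists t; exact: sub.
by rewrite e1 e2 inf0 mulr0.
Qed.
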